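(* Let $\mathcal P$ be a CPOS $2n$-gon which is equal-area, and write $P_{i+n+1}-P_{i+n}=-\alpha_i(P_{i+1}-P_i)$ with $\alpha_i>0$, $1\le i\le n$. Then either $\alpha_i=1$ for all $i$, in which case $\mathcal P$ is symmetric with respect to a point, or $n$ is odd and there is $\alpha>0$, $\alpha\ne1$, such that $\alpha_i=\alpha$ for all odd $i$ and $\alpha_i=\alpha^{-1}$ for all even $i$ ($1\le i\le n$).
   Context: A CPOS $2n$-gon ($n\ge2$) is a closed planar polygon $\mathcal P$ with vertices $P_1,\dots,P_{2n}$ (indices mod $2n$) bounding a convex region, with no two adjacent sides parallel, with $P_{i+n+1}-P_{i+n}$ parallel to $P_{i+1}-P_i$ for all $i$ (by convexity these are then antiparallel), and positively oriented: $[P_{i+1}-P_i,P_{j+1}-P_j]>0$ for $1\le i<j\le n$ ($[\cdot,\cdot]$ = determinant). $\mathcal P$ is equal-area if $[P_{i+1}-P_i,P_i-P_{i-1}]$ is the same for all $i$. $\mathcal P$ is symmetric with respect to $O$ if $P_{i+n}-O=O-P_i$ for all $i$. *)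

(* Defs.v *)
From HB Require Import structures.
From mathcomp Require Import all_boot all_order all_algebra.
Set Implicit Arguments. Unset Strict Implicit. Unset Printing Implicit Defensive.
Import Order.TTheory GRing.Theory Num.Theory.
Local Open Scope ring_scope.

Section Plane.
Variable R : realFieldType.

Definition pt := (R * R)%type.
Definition vsub (p q : pt) : pt := (p.1 - q.1, p.2 - q.2).
Definition vscale (a : R) (p : pt) : pt := (a * p.1, a * p.2).
Definition det2 (u v : pt) : R := u.1 * v.2 - u.2 * v.1.

(* A polygon with 2n vertices: P : nat -> pt, indices taken mod 2n. *)
Definition periodic (n : nat) (P : nat -> pt) := forall i, P (i + 2 * n)%N = P i.

Definition side (P : nat -> pt) (i : nat) : pt := vsub (P i.+1) (P i).

Definition convex_polygon (P : nat -> pt) :=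
  forall i, (forall k, 0 <= det2 (side P i) (vsub (P k) (P i))) \/
            (forall k, det2 (side P i) (vsub (P k) (P i)) <= 0).

Definition CPOS (n : nat) (P : nat -> pt) :=
  (2 <= n)%N /\ periodic n P /\ convex_polygon P /\
      (forall i, det2 (side P i.+1) (side P i) != 0) /\
      (forall i, det2 (side P (i + n)%N) (side P i) = 0) /\
      (* positive orientation *)
      (forall i j, (1 <= i)%N -> (i < j)%N -> (j <= n)%N ->
         0 < det2 (side P i) (side P j)).

Definition equal_area (P : nat -> pt) :=
  forall i j, det2 (side P i.+1) (side P i) = det2 (side P j.+1) (side P j).

Definition symmetric_wrt (n : nat) (P : nat -> pt) (O : pt) :=
  forall i, vsub (P (i + n)%N) O = vsub O (P i).

End Plane.

(* Main.v *)
Require Import Defs.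
From HB Require Import structures.
From mathcomp Require Import all_boot all_order all_algebra.
From mathcomp Require Import ring lra.
Import Order.TTheory GRing.Theory Num.Theory.
Local Open Scope ring_scope.

Lemma det2_sl (R : realFieldType) (a : R) (u v : pt R) :
  det2 (vscale a u) v = a * det2 u v.
Proof. rewrite /det2 /vscale /=; ring. Qed.

Lemma det2_sr (R : realFieldType) (a : R) (u v : pt R) :
  det2 u (vscale a v) = a * det2 u v.
Proof. rewrite /det2 /vscale /=; ring. Qed.

Lemma per_mul (R : realFieldType) n (P : nat -> pt R) :
  periodic n P -> forall q m, P (q * (2 * n) + m)%N = P m.
Proof.
move=> per; elim=> [|q IH] m; first by rewrite mul0n add0n.
by rewrite mulSn -addnA addnC per IH.
Qed.

Lemma sym_aux (R : realFieldType) n (P : nat -> pt R) :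
  (0 < n)%N -> periodic n P ->
  (forall i, (1 <= i <= n)%N -> side P (i + n)%N = vscale (-1) (side P i)) ->
  exists O, symmetric_wrt n P O.
Proof.
move=> n0 per hs.
have sp : forall i, side P (i + 2 * n)%N = side P i.
  by move=> i; rewrite /side -addSn !per.
have hv : forall i, (i < 2 * n)%N ->
   (P (i + n).+1).1 - (P (i + n)).1 = - ((P i.+1).1 - (P i).1) /\
   (P (i + n).+1).2 - (P (i + n)).2 = - ((P i.+1).2 - (P i).2).
  move=> i hi.
  have E : side P (i + n)%N = vscale (-1) (side P i).
    case: (posnP i) => [->|ip].
      have := hs n; rewrite n0 leqnn => /(_ isT) h.
      rewrite -(sp 0) add0n mul2n -addnn h /vscale /side /vsub /=.
      congr pair; ring.
    case: (leqP i n) => hin; first by apply: hs; rewrite ip hin.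
    have [j ej] : exists j, i = (j + n)%N by exists (i - n)%N; rewrite subnK // ltnW.
    subst i.
    have hj : (1 <= j <= n)%N.
      apply/andP; split; last by move: hi; rewrite mul2n -addnn ltn_add2r => /ltnW.
      by move: hin; rewrite -{1}(add0n n) ltn_add2r.
    rewrite -addnA addnn -mul2n sp hs // /vscale /=; congr pair; ring.
  move: E; rewrite /side /vsub /vscale /= => [[-> ->]]; split; ring.
have hr : forall r, (r <= 2 * n)%N ->
   (P (r + n)%N).1 + (P r).1 = (P n).1 + (P 0%N).1 /\
   (P (r + n)%N).2 + (P r).2 = (P n).2 + (P 0%N).2.
  elim=> [|r IH] hr; first by rewrite add0n.
  have [h1 h2] := IH (ltnW hr).
  have [g1 g2] := hv r hr.
  rewrite addSn; move: h1 h2 g1 g2; clear; split; lra.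
exists (((P n).1 + (P 0%N).1) / 2, ((P n).2 + (P 0%N).2) / 2).
move=> i.
have hn : (0 < 2 * n)%N by rewrite muln_gt0.
have e1 : P (i + n)%N = P (i %% (2 * n) + n)%N.
  by rewrite {1}(divn_eq i (2 * n)) -addnA per_mul.
have e2 : P i = P (i %% (2 * n))%N.
  by rewrite {1}(divn_eq i (2 * n)) per_mul.
have [h1 h2] := hr (i %% (2 * n))%N (ltnW (ltn_pmod _ hn)).
rewrite /vsub e1 e2 /=; move: h1 h2; clear.
set a := (P _).1; set b := (P _).1; set c := (P _).2; set d := (P _).2.
move=> h1 h2; congr pair; lra.
Qed.

Theorem mainTheorem4 (R : realFieldType) (n : nat) (P : nat -> pt R)
  (alpha : nat -> R) :
  CPOS n P -> equal_area P ->
  (forall i, (1 <= i <= n)%N -> 0 < alpha i) ->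
  (forall i, (1 <= i <= n)%N ->
     side P (i + n)%N = vscale (- alpha i) (side P i)) ->
  ((forall i, (1 <= i <= n)%N -> alpha i = 1) /\ exists O, symmetric_wrt n P O)
  \/
  (odd n /\ exists a : R, [/\ 0 < a, a != 1 &
     forall i, (1 <= i <= n)%N -> alpha i = (if odd i then a else a^-1)]).
Proof.
move=> [n2 [per [_ [nonpar [_ orient]]]]] ea apos hs.
have n0 : (0 < n)%N by apply: leq_trans n2.
have sp : forall i, side P (i + 2 * n)%N = side P i.
  by move=> i; rewrite /side -addSn !per.
have hmul : forall i, (1 <= i)%N -> (i < n)%N -> alpha i.+1 * alpha i = 1.
  move=> i h1 h2.
  have e := ea (i + n)%N i.
  have H1 := hs i.+1; rewrite ltnS h2 /= in H1.
  have H2 := hs i; rewrite h1 (ltnW h2) in H2.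
  rewrite -addSn H1 // H2 // det2_sl det2_sr in e.
  apply: (mulIf (nonpar i)); rewrite mul1r -[RHS]e; ring.
have h1n : alpha 1%N = alpha n.
  have e := ea n 0%N.
  have E : side P n.+1 = side P (1 + n)%N by rewrite add1n.
  rewrite E hs ?n0 // -(sp 0%N) add0n mul2n -addnn hs ?n0 ?leqnn // in e.
  rewrite det2_sl det2_sr in e.
  have D := orient 1%N n (leqnn _) n2 (leqnn _).
  apply: (mulIf (lt0r_neq0 D)); lra.
have halt : forall i, (1 <= i <= n)%N ->
    alpha i = if odd i then alpha 1%N else (alpha 1%N)^-1.
  elim=> [//|i IH] /andP[_ hi].
  case: (posnP i) => [->//|ip].
  have ai0 : alpha i != 0 by apply: lt0r_neq0; apply: apos; rewrite ip ltnW.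
  rewrite -[alpha i.+1](mulfK ai0) hmul // mul1r IH; last by rewrite ip ltnW.
  by rewrite /=; case: (odd i) => //=; rewrite invrK.
have a0 : 0 < alpha 1%N by apply: apos; rewrite leqnn ltnW.
case: (eqVneq (alpha 1%N) 1) => [a1|an1].
  have all1 : forall i, (1 <= i <= n)%N -> alpha i = 1.
    by move=> i hi; rewrite halt // a1 invr1; case: odd.
  left; split => //.
  apply: sym_aux => // i hi; rewrite hs // all1 //.
right; split.
  case on: (odd n) => //.
  have := halt n; rewrite n0 leqnn on /= -h1n => /(_ isT) e.
  have : alpha 1%N * alpha 1%N = 1 by rewrite {1}e mulVf // lt0r_neq0.
  move/eqP; rewrite -expr2 sqrf_eq1 => /orP[/eqP h|/eqP h].
    by rewrite h eqxx in an1.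
  by move: a0; rewrite h; lra.
by exists (alpha 1%N); split.
Qed.
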